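(* Let $X$ be a totally disconnected compact metrizable space, $T\colon X\to X$ a homeomorphism, $K$ a field with involution, $\mathcal A=C_K(X)\rtimes_T\mathbb Z$, $E\subseteq X$ a nonempty clopen set and $\mathcal P$ a partition of $X\setminus E$. Let $\mathcal B$ be the unital $*$-subalgebra of $\mathcal A$ generated by $\{\chi_Zt: Z\in\mathcal P\}$ and $\mathcal B_0=C_K(X)\cap\mathcal B$. Then $\mathcal B_0$ is the linear span of $1$ and the projections $$\chi_{T^{-r}(Z_{-r})\cap T^{-r+1}(Z_{-r+1})\cap\cdots\cap Z_0\cap T(Z_1)\cap\cdots\cap T^{s-1}(Z_{s-1})}$$ with $r,s\ge0$ and $Z_{-r},\dots,Z_{s-1}\in\mathcal P$.
   Context: $C_K(X)$ is the $*$-algebra of locally constant functions $X\to K$ (pointwise operations, $f^*=\bar f$), $\chi_U$ the characteristic function of a clopen $U$. $\mathcal A=C_K(X)\rtimes_T\mathbb Z$ is the algebraic crossed product: finite sums $\sum_if_it^i$ with $f_i\in C_K(X)$, multiplication determined by $tf=(f\circ T^{-1})t$ (so $t\chi_Ut^{-1}=\chi_{T(U)}$), involution $(ft^i)^*=t^{-i}f^*$, and $t^{-1}=t^*$. A partition of a clopen set $Y$ is a finite family of nonempty, pairwise disjoint clopen subsets with union $Y$. *)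

(* Defs.v *)
From HB Require Import structures.
From mathcomp Require Import all_boot all_order all_algebra.
From Stdlib Require Rdefinitions Raxioms.
Set Implicit Arguments. Unset Strict Implicit. Unset Printing Implicit Defensive.
Import Order.TTheory GRing.Theory Num.Theory.
Local Open Scope ring_scope.

Section Topology.
Variable X : Type.
Variable opn : (X -> Prop) -> Prop.

Definition is_topology : Prop :=
  [/\ opn (fun _ => True),
      (forall F : (X -> Prop) -> Prop, (forall U, F U -> opn U) ->
          opn (fun x => exists2 U, F U & U x))
    & (forall U V, opn U -> opn V -> opn (fun x => U x /\ V x))].

Definition compact_space : Prop :=
  forall (I : Type) (F : I -> X -> Prop),
    (forall i, opn (F i)) -> (forall x, exists i, F i x) ->
    exists l : seq I, forall x, exists2 i, List.In i l & F i x.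

Definition connected_subset (S : X -> Prop) : Prop :=
  forall U V, opn U -> opn V ->
    (forall x, S x -> U x \/ V x) ->
    (forall x, ~ (S x /\ U x /\ V x)) ->
    (forall x, S x -> U x) \/ (forall x, S x -> V x).

Definition totally_disconnected : Prop :=
  forall S, connected_subset S -> forall x y, S x -> S y -> x = y.

Definition metrizable : Prop :=
  exists d : X -> X -> Rdefinitions.R,
    [/\ (forall x y, d x y = Rdefinitions.IZR BinNums.Z0 <-> x = y),
        (forall x y, d x y = d y x),
        (forall x y z, Rdefinitions.Rle (d x z)
                          (Rdefinitions.Rplus (d x y) (d y z)))
      & (forall U, opn U <-> forall x, U x ->
           exists eps, Rdefinitions.Rlt (Rdefinitions.IZR BinNums.Z0) eps /\
             forall y, Rdefinitions.Rlt (d x y) eps -> U y)].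

Definition continuous (f : X -> X) : Prop :=
  forall U, opn U -> opn (fun x => U (f x)).

Definition clopen (A : pred X) : Prop :=
  opn (fun x => A x) /\ opn (fun x => ~~ A x).

End Topology.

Section Crossed.
Variables (X : Type) (K : fieldType) (conj : K -> K) (T Tinv : X -> X).

Definition Tpow (n : int) (x : X) : X :=
  match n with Posz k => iter k T x | Negz k => iter k.+1 Tinv x end.

Definition chi (U : pred X) : X -> K := fun x => if U x then 1 else 0.

(* A formal finite sum  sum_p  p.2 t^{p.1}  is a list of pairs (i, f). *)
Definition cpel := seq (int * (X -> K)).

Definition den (a : cpel) (n : int) (x : X) : K :=
  \sum_(p <- a | p.1 == n) p.2 x.

Definition cp_one : cpel := [:: (0%Z, fun _ => 1)].
Definition cp_add (a b : cpel) : cpel := a ++ b.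
Definition cp_scale (c : K) (a : cpel) : cpel :=
  [seq (p.1, fun x => c * p.2 x) | p <- a].
(* (f t^i)(g t^j) = f (g o T^{-i}) t^{i+j} *)
Definition cp_mul (a b : cpel) : cpel :=
  [seq (p.1 + q.1, fun x => p.2 x * q.2 (Tpow (- p.1) x)) | p <- a, q <- b].
(* (f t^i)^* = t^{-i} f^* = (f^* o T^i) t^{-i} *)
Definition cp_star (a : cpel) : cpel :=
  [seq (- p.1, fun x => conj (p.2 (Tpow p.1 x))) | p <- a].

(* the unital *-subalgebra generated by the elements chi_{Zs i} t, i : I *)
Definition gen_subalg (I : Type) (Zs : I -> pred X) (a : cpel) : Prop :=
  forall Q : cpel -> Prop,
    Q cp_one ->
    (forall i, Q [:: (1%Z, chi (Zs i))]) ->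
    (forall b c, Q b -> Q c -> Q (cp_add b c)) ->
    (forall k b, Q b -> Q (cp_scale k b)) ->
    (forall b c, Q b -> Q c -> Q (cp_mul b c)) ->
    (forall b, Q b -> Q (cp_star b)) ->
    Q a.

(* membership in B_0 = C_K(X) \cap B, for an element given by its
   coefficient function a : int -> X -> K *)
Definition in_B0 (I : Type) (Zs : I -> pred X) (a : int -> X -> K) : Prop :=
  (exists2 s, gen_subalg Zs s & forall n x, den s n x = a n x) /\
  (forall n x, n != 0%Z -> a n x = 0).

(* T^{-r}(Z_{-r}) \cap ... \cap Z_0 \cap ... \cap T^{s-1}(Z_{s-1}),
   where Z_k = Zs (Z k); x \in T^k(W) iff T^{-k} x \in W *)
Definition cyl (I : Type) (Zs : I -> pred X) (r s : nat) (Z : int -> I) : pred X :=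
  fun x => [forall i : 'I_(r + s),
             Zs (Z (i%:Z - r%:Z)) (Tpow (r%:Z - i%:Z) x)].

Definition in_span_proj (I : Type) (Zs : I -> pred X) (a : int -> X -> K) : Prop :=
  exists (c0 : K) (l : seq (K * nat * nat * (int -> I))),
    forall n x, a n x =
      if n == 0%Z then
        c0 + \sum_(q <- l) q.1.1.1 * chi (cyl Zs q.1.1.2 q.1.2 q.2) x
      else 0.

End Crossed.

(* Main.v *)
Require Import Defs.
From HB Require Import structures.
From mathcomp Require Import all_boot all_order all_algebra.
From mathcomp Require Import zify.
From Stdlib Require Import Classical.
Import Order.TTheory GRing.Theory Num.Theory.
Set Implicit Arguments. Unset Strict Implicit.
Local Open Scope ring_scope.

Section Tp.
Variables (X : Type) (T Tinv : X -> X) (HTK : cancel T Tinv) (HTKi : cancel Tinv T).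
Local Notation Tp := (Tpow T Tinv).

Lemma Tpow0 x : Tp 0 x = x. Proof. by []. Qed.

Lemma TpowS n x : Tp (1 + n) x = T (Tp n x).
Proof.
case: n => [k|k]; first by rewrite -intS.
case: k => [|k].
  by have -> : 1 + Negz 0 = 0 by rewrite NegzE; lia.
have -> : 1 + Negz k.+1 = Negz k by rewrite !NegzE; lia.
by rewrite /= HTKi.
Qed.

Lemma TpowN1 n x : Tp (-1 + n) x = Tinv (Tp n x).
Proof.
have e : n = 1 + (-1 + n) by lia.
by rewrite [in RHS]e TpowS HTK.
Qed.

Lemma TpowD a b x : Tp (a + b) x = Tp a (Tp b x).
Proof.
case: a => k; elim: k => [|k IH].
- by rewrite add0r.
- by rewrite intS -addrA !TpowS IH.
- have -> : Negz 0 + b = -1 + b by rewrite NegzE; lia.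
  by rewrite TpowN1.
- have -> : Negz k.+1 + b = -1 + (Negz k + b) by rewrite !NegzE; lia.
  have -> : Negz k.+1 = -1 + Negz k by rewrite !NegzE; lia.
  by rewrite !TpowN1 IH.
Qed.
End Tp.
Section Cyl.
Variables (X : Type) (T Tinv : X -> X) (HTK : cancel T Tinv) (HTKi : cancel Tinv T).
Variables (I : Type) (Zs : I -> pred X).
Local Notation Tp := (Tpow T Tinv).
Local Notation cy := (cyl T Tinv Zs).

Lemma cylP r s Z x : cy r s Z x <->
  (forall j : int, - (r%:Z) <= j < s%:Z -> Zs (Z j) (Tp (- j) x)).
Proof.
rewrite /cyl; split.
- move/forallP => H j /andP[h1 h2].
  have ei : ((absz (j + r%:Z)%R)%:Z) = j + r%:Z.
    rewrite abszE ger0_norm //; lia.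
  have ord : (absz (j + r%:Z)%R < r + s)%N.
    by rewrite -ltz_nat ei PoszD; lia.
  have := H (Ordinal ord) => /=.
  rewrite ei.
  have -> : j + r%:Z - r%:Z = j by lia.
  by have -> : r%:Z - (j + r%:Z) = - j by lia.
- move=> H; apply/forallP => i.
  have hi := ltn_ord i.
  have := H (i%:Z - r%:Z) ltac:(apply/andP; split; lia).
  by rewrite opprB.
Qed.

Lemma cyl_shift r s Z m x : cy r s Z (Tp (- m) x) <->
  (forall j : int, m - r%:Z <= j < m + s%:Z -> Zs (Z (j - m)) (Tp (- j) x)).
Proof.
rewrite cylP; split => H j /andP[h1 h2].
- have := H (j - m) ltac:(apply/andP; split; lia).
  rewrite -TpowD //.
  by have -> : - (j - m) + - m = - j by lia.
- have := H (j + m) ltac:(apply/andP; split; lia).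
  have -> : j + m - m = j by lia.
  by rewrite opprD TpowD.
Qed.

Lemma mkrs (lo hi : int) : lo <= 0 -> 0 <= hi ->
  exists r s : nat, - (r%:Z) = lo /\ s%:Z = hi.
Proof.
move=> h1 h2; exists (absz lo), (absz hi); split; rewrite abszE; [rewrite (ler0_norm h1) opprK | rewrite (ger0_norm h2)]; done.
Qed.
End Cyl.
Section Good.
Variables (X : Type) (T Tinv : X -> X) (HTK : cancel T Tinv) (HTKi : cancel Tinv T).
Variables (K : fieldType) (conj : {rmorphism K -> K}).
Variables (I : finType) (Zs : I -> pred X).
Hypothesis HPdisj : forall i j x, i != j -> Zs i x -> Zs j x -> False.
Local Notation Tp := (Tpow T Tinv).
Local Notation cy := (cyl T Tinv Zs).
Local Notation ch := (chi K).

Lemma chi_ext (A B : pred X) x y : (A x <-> B y) -> ch A x = ch B y.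
Proof.
rewrite /chi => H; case: (boolP (A x)) => ha; case: (boolP (B y)) => hb //.
- by move: hb => /negP; case; apply/H.
- by move: ha => /negP; case; apply/H.
Qed.

Lemma chi_mul (A B C : pred X) x y z : (C z <-> A x /\ B y) ->
  ch A x * ch B y = ch C z.
Proof.
rewrite /chi => H; case: (boolP (A x)) => ha; case: (boolP (B y)) => hb;
  case: (boolP (C z)) => hc; rewrite ?mulr1 ?mulr0 ?mul0r //.
- by move: hc => /negP; case; apply/H.
- by case: (proj1 H hc) => _ h; move: hb => /negP.
- by case: (proj1 H hc) => h _; move: ha => /negP.
- by case: (proj1 H hc) => h _; move: ha => /negP.
Qed.

Definition good (p : int * (X -> K)) : Prop :=
  (p.1 = 0 /\ exists c, forall x, p.2 x = c) \/
  exists c (r s : nat) (Z : int -> I), - (r%:Z) <= p.1 <= s%:Z /\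
    forall x, p.2 x = c * ch (cy r s Z) x.

Definition allgood (b : cpel X K) : Prop := foldr (fun p acc => good p /\ acc) True b.

Lemma allgood_cat a b : allgood a -> allgood b -> allgood (a ++ b).
Proof. by elim: a => //= p a IH [h1 h2] hb; split; last apply: IH. Qed.

Lemma allgood_map f a : (forall p, good p -> good (f p)) -> allgood a -> allgood (map f a).
Proof. by move=> hf; elim: a => //= p a IH [h1 h2]; split; [apply: hf | apply: IH]. Qed.

Lemma allgood_allpairs (F : int * (X -> K) -> int * (X -> K) -> int * (X -> K)) a b :
  (forall p q, good p -> good q -> good (F p q)) -> allgood a -> allgood b ->
  allgood [seq F p q | p <- a, q <- b].
Proof.
move=> hF; elim: a => //= p a IH [h1 h2] hb.
apply: allgood_cat; last by apply: IH.
by apply: allgood_map => // q hq; apply: hF.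
Qed.

Lemma zero_cyl (n : int) : exists r s : nat, - (r%:Z) <= n <= s%:Z.
Proof.
case: n => k; first by exists 0%N, k; apply/andP; split; lia.
by exists k.+1, 0%N; rewrite NegzE; apply/andP; split; lia.
Qed.


Lemma good_scale k p : good p -> good (p.1, fun x => k * p.2 x).
Proof.
case: p => n f; rewrite /good /=; case=> [[-> [c hc]] | [c [r [s [Z [hd /= hf]]]]]].
- by left; split=> //; exists (k * c) => x /=; rewrite hc.
- by right; exists (k * c), r, s, Z; split=> // x; rewrite /= hf mulrA.
Qed.

Lemma conj_chi (A : pred X) y : conj (ch A y) = ch A y.
Proof. by rewrite /chi; case: (A y); rewrite ?rmorph1 ?rmorph0. Qed.

Lemma good_star p : good p -> good (- p.1, fun x => conj (p.2 (Tp p.1 x))).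
Proof.
case: p => n f; rewrite /good /=; case=> [[-> [c hc]] | [c [r [s [Z [/andP[hd1 hd2] /= hf]]]]]].
- by left; split; [rewrite oppr0 | exists (conj c) => x /=; rewrite hc].
- have [r' [s' [e1 e2]]] := @mkrs (- n - r%:Z) (- n + s%:Z) ltac:(lia) ltac:(lia).
  right; exists (conj c), r', s', (fun j => Z (j - (- n))); split.
    by rewrite /= e1 e2; apply/andP; split; lia.
  move=> x /=; rewrite (hf _) rmorphM conj_chi; congr (_ * _); apply: chi_ext.
  have -> : Tp n x = Tp (- - n) x by rewrite opprK.
  rewrite cyl_shift // cylP e1 e2; done.
Qed.


Lemma good_mul p q : good p -> good q ->
  good (p.1 + q.1, fun x => p.2 x * q.2 (Tp (- p.1) x)).
Proof.
case: p => n f; case: q => m g; rewrite /good /=.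
case=> [[-> [c hc]] | [c [r [s [Z [/andP[hn1 hn2] hf]]]]]];
case=> [[-> [d hd]] | [d [r' [s' [Z' [/andP[hm1 hm2] hg]]]]]].
- left; split; first by rewrite addr0.
  by exists (c * d) => x; rewrite hc hd.
- right; exists (c * d), r', s', Z'; split; first by rewrite add0r; apply/andP.
  by move=> x; rewrite hc hg oppr0 Tpow0 mulrA.
- right; exists (c * d), r, s, Z; split; first by rewrite addr0; apply/andP.
  by move=> x; rewrite hf hd mulrAC.
case: (classic (exists j : int, [/\ - (r%:Z) <= j < s%:Z, n - r'%:Z <= j < n + s'%:Z
                                  & Z j <> Z' (j - n)])).
  case=> j [hj1 hj2 hne].
  have [r0 [s0 h0]] := zero_cyl (n + m).
  right; exists 0, r0, s0, Z; split => // x.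
  rewrite mul0r hf hg mulrACA.
  have -> : ch (cy r s Z) x * ch (cy r' s' Z') (Tp (- n) x) = ch pred0 x.
    apply: chi_mul; split => //= -[/cylP H1 /(cyl_shift HTK HTKi) H2].
    have a := H1 j hj1; have b := H2 j hj2.
    have hne2 : Z j != Z' (j - n) by apply/eqP.
    by case: (HPdisj hne2 a b).
  by rewrite /chi mulr0.
move=> Hno.
have agree : forall j, - (r%:Z) <= j < s%:Z -> n - r'%:Z <= j < n + s'%:Z ->
    Z j = Z' (j - n).
  by move=> j h1 h2; apply: NNPP => hne; apply: Hno; exists j.
have [lo [hl1 hl2 hl3]] : exists lo : int,
    [/\ lo <= - (r%:Z), lo <= n - r'%:Z & (lo = - (r%:Z) \/ lo = n - r'%:Z)].
  case: (lerP (- (r%:Z)) (n - r'%:Z)) => h;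
    [exists (- (r%:Z)) | exists (n - r'%:Z)]; split; lia.
have [hi [hh1 hh2 hh3]] : exists hi : int,
    [/\ s%:Z <= hi, n + s'%:Z <= hi & (hi = s%:Z \/ hi = n + s'%:Z)].
  case: (lerP (s%:Z) (n + s'%:Z)) => h;
    [exists (n + s'%:Z) | exists (s%:Z)]; split; lia.
have [r'' [s'' [e1 e2]]] := @mkrs lo hi ltac:(lia) ltac:(lia).
pose Z'' := fun j => if (- (r%:Z) <= j) && (j < s%:Z) then Z j else Z' (j - n).
right; exists (c * d), r'', s'', Z''; split.
  by rewrite e1 e2; apply/andP; split; lia.
move=> x; rewrite hf hg mulrACA; congr (_ * _); apply: chi_mul.
rewrite cylP cylP (cyl_shift HTK HTKi) e1 e2; split.
- move=> H; split => j hj.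
  + by have := H j ltac:(lia); rewrite /Z'' hj.
  + have := H j ltac:(lia); rewrite /Z''; case: ifP => hj' //.
    by rewrite (agree j hj' hj).
- case=> H1 H2 j hj; rewrite /Z''; case: ifP => hj'.
  + exact: H1.
  + apply: H2; move/negbT: hj'; rewrite negb_and -ltNge -leNgt => /orP[h|h]; lia.
Qed.

End Good.
Section Gen.
Variables (X : Type) (T Tinv : X -> X) (HTK : cancel T Tinv) (HTKi : cancel Tinv T).
Variables (K : fieldType) (conj : {rmorphism K -> K}).
Variables (I : finType) (Zs : I -> pred X).
Local Notation Tp := (Tpow T Tinv).
Local Notation cy := (cyl T Tinv Zs).
Local Notation ch := (chi K).
Local Notation gs := (gen_subalg conj T Tinv Zs).

Lemma gs_one : gs (@cp_one X K). Proof. by move=> Q h1. Qed.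
Lemma gs_gen i : gs [:: (1%Z, ch (Zs i))]. Proof. by move=> Q h1 h2. Qed.
Lemma gs_add b c : gs b -> gs c -> gs (cp_add b c).
Proof. by move=> hb hc Q h1 h2 h3 h4 h5 h6; apply h3; [exact: (hb Q h1 h2 h3 h4 h5 h6) | exact: (hc Q h1 h2 h3 h4 h5 h6)]. Qed.
Lemma gs_scale k b : gs b -> gs (cp_scale k b).
Proof. by move=> hb Q h1 h2 h3 h4 h5 h6; apply h4; exact: (hb Q h1 h2 h3 h4 h5 h6). Qed.
Lemma gs_mul b c : gs b -> gs c -> gs (cp_mul T Tinv b c).
Proof. by move=> hb hc Q h1 h2 h3 h4 h5 h6; apply h5; [exact: (hb Q h1 h2 h3 h4 h5 h6) | exact: (hc Q h1 h2 h3 h4 h5 h6)]. Qed.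
Lemma gs_star b : gs b -> gs (cp_star conj T Tinv b).
Proof. by move=> hb Q h1 h2 h3 h4 h5 h6; apply h6; exact: (hb Q h1 h2 h3 h4 h5 h6). Qed.

Lemma cp_mul11 (a b : int) (f g : X -> K) : cp_mul T Tinv [:: (a, f)] [:: (b, g)] =
  [:: (a + b, fun x => f x * g (Tp (- a) x))].
Proof. by []. Qed.
Lemma cp_star1 (a : int) (f : X -> K) : cp_star conj T Tinv [:: (a, f)] =
  [:: (- a, fun x => conj (f (Tp a x)))].
Proof. by []. Qed.

Definition isind (f : X -> K) (P : X -> Prop) :=
  forall x, (P x /\ f x = 1) \/ (~ P x /\ f x = 0).

Lemma fwd s (Z : int -> I) : exists f, gs [:: (s%:Z, f)] /\
  isind f (fun x => forall k : nat, (k < s)%N -> Zs (Z k) (Tp (- (k%:Z)) x)).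
Proof.
elim: s => [|s [f [hf hi]]].
  by exists (fun _ => 1); split; [exact: gs_one | move=> x; left].
have := gs_mul hf (gs_gen (Z s)); rewrite cp_mul11.
have -> : s%:Z + 1 = s.+1%:Z by lia.
move=> h; eexists; split; first exact: h.
move=> x /=; case: (hi x) => [[hp ->]|[hp ->]]; rewrite /chi.
- case: (boolP (Zs (Z s) (Tp (- (s%:Z)) x))) => hz.
    left; split; last by rewrite mulr1.
    by move=> k; rewrite ltnS leq_eqVlt => /orP[/eqP->|]; auto.
  right; split; last by rewrite mulr0.
  by move=> H; move: hz => /negP; apply; apply: H.
- right; split; last by rewrite mul0r.
  by move=> H; apply: hp => k hk; apply: H; apply: ltnW.
Qed.

Lemma bwd r (Z : int -> I) : exists g, gs [:: (- (r%:Z), g)] /\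
  isind g (fun x => forall k : nat, (k < r)%N ->
     Zs (Z (- (k.+1%:Z))) (Tp (k.+1%:Z) x)).
Proof.
elim: r => [|r [g [hg hi]]].
  by exists (fun _ => 1); rewrite oppr0; split; [exact: gs_one | move=> x; left].
have := gs_mul hg (gs_star (gs_gen (Z (- (r.+1%:Z))))); rewrite cp_star1 cp_mul11.
have -> : - (r%:Z) + - 1%:Z = - (r.+1%:Z) by lia.
move=> h; eexists; split; first exact: h.
move=> x; cbv beta; rewrite conj_chi.
have -> : Tp 1 (Tp (- - (r%:Z)) x) = Tp (r.+1%:Z) x.
  by rewrite opprK -TpowD // -intS.
case: (hi x) => [[hp ->]|[hp ->]]; rewrite /chi.
- case: (boolP (Zs (Z (- (r.+1%:Z))) (Tp (r.+1%:Z) x))) => hz.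
    left; split; last by rewrite mulr1.
    by move=> k; rewrite ltnS leq_eqVlt => /orP[/eqP->|]; auto.
  right; split; last by rewrite mulr0.
  by move=> H; move: hz => /negP; apply; apply: H.
- right; split; last by rewrite mul0r.
  by move=> H; apply: hp => k hk; apply: H; apply: ltnW.
Qed.

Lemma proj (a : int) (f : X -> K) P : gs [:: (a, f)] -> isind f P ->
  exists f', gs [:: (0, f')] /\ isind f' P.
Proof.
move=> hf hi; have := gs_mul hf (gs_star hf); rewrite cp_star1 cp_mul11 addrN.
move=> h; eexists; split; first exact: h.
move=> x; cbv beta; rewrite -TpowD // addrN Tpow0.
case: (hi x) => [[hp ->]|[hp ->]].
- by left; split=> //; rewrite rmorph1 mulr1.
- by right; split=> //; rewrite mul0r.
Qed.

Lemma prodp (f g : X -> K) P Q : gs [:: (0, f)] -> gs [:: (0, g)] -> isind f P -> isind g Q ->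
  exists h, gs [:: (0, h)] /\ isind h (fun x => P x /\ Q x).
Proof.
move=> hf hg hif hig; have := gs_mul hf hg; rewrite cp_mul11 addr0 oppr0.
move=> h; eexists; split; first exact: h.
move=> x; cbv beta; rewrite Tpow0.
case: (hif x) => [[hp ->]|[hp ->]]; case: (hig x) => [[hq ->]|[hq ->]].
- by left; rewrite mulr1.
- by right; split; [case | rewrite mulr0].
- by right; split; [case | rewrite mul0r].
- by right; split; [case | rewrite mul0r].
Qed.

Lemma cyl_in r s Z : exists h, gs [:: (0, h)] /\ forall x, h x = ch (cy r s Z) x.
Proof.
have [g [hg hgi]] := bwd r Z; have [g' [hg' hgi']] := proj hg hgi.
have [f [hf hfi]] := fwd s Z; have [f' [hf' hfi']] := proj hf hfi.
have [h [hh hhi]] := prodp hg' hf' hgi' hfi'.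
exists h; split => // x.
have E : cy r s Z x <->
    (forall k : nat, (k < r)%N -> Zs (Z (- (k.+1%:Z))) (Tp (k.+1%:Z) x)) /\
    (forall k : nat, (k < s)%N -> Zs (Z k) (Tp (- (k%:Z)) x)).
  rewrite cylP; split.
  - move=> H; split=> k hk.
      by have := H (- (k.+1%:Z)) ltac:(apply/andP; split; lia); rewrite opprK.
    exact: H (k%:Z) ltac:(apply/andP; split; lia).
  - case=> H1 H2; case=> k /andP[hk1 hk2].
      by apply: H2; lia.
    by rewrite NegzE opprK; apply: H1; move: hk1; rewrite NegzE; lia.
rewrite /chi; case: (hhi x) => [[hp ->]|[hp ->]].
- by have /E -> := hp.
- by case: ifP => // hc; case: hp; apply/E.
Qed.

Lemma den_cat (a b : cpel X K) n x : den (a ++ b) n x = den a n x + den b n x.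
Proof. by rewrite /den big_cat. Qed.
Lemma den1 (m : int) (f : X -> K) n x : den [:: (m, f)] n x = if m == n then f x else 0.
Proof. by rewrite /den big_cons big_nil /=; case: ifP; rewrite ?addr0. Qed.

Lemma span_in c0 (l : seq (K * nat * nat * (int -> I))) : exists s, gs s /\
  forall n x, den s n x = if n == 0%Z then
      c0 + \sum_(q <- l) q.1.1.1 * ch (cy q.1.1.2 q.1.2 q.2) x else 0.
Proof.
elim: l => [|q l [s [hs hd]]].
  exists (cp_scale c0 (@cp_one X K)); split; first exact: gs_scale gs_one.
  move=> n x; rewrite /cp_scale /cp_one /= den1 big_nil addr0 mulr1 eq_sym.
  by case: ifP.
have [h [hh hhx]] := cyl_in q.1.1.2 q.1.2 q.2.
exists (cp_add (cp_scale q.1.1.1 [:: (0, h)]) s); split.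
  by apply: gs_add => //; apply: gs_scale.
move=> n x; rewrite /cp_add den_cat.
have -> : cp_scale q.1.1.1 [:: (0, h)] = [:: (0, fun x => q.1.1.1 * h x)] by [].
rewrite den1 hd big_cons.
case: (boolP (n == 0)) => hn.
  by rewrite eq_sym hn hhx addrCA.
by rewrite eq_sym (negbTE hn) add0r.
Qed.

End Gen.
Lemma extract (X : Type) (T Tinv : X -> X) (K : fieldType) (I : finType)
  (Zs : I -> pred X) (s : cpel X K) : allgood T Tinv Zs s ->
  exists c0 (l : seq (K * nat * nat * (int -> I))), forall x, den s 0 x =
    c0 + \sum_(q <- l) q.1.1.1 * chi K (cyl T Tinv Zs q.1.1.2 q.1.2 q.2) x.
Proof.
elim: s => [|p s IH] /=.
  by exists 0, [::] => x; rewrite /den !big_nil add0r.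
case: p => m f [hp hs]; have [c0 [l hl]] := IH hs.
move: hp; rewrite /good /=; case=> [[e0 [c hc]] | [c [r [s' [Z [_ hf]]]]]].
- by exists (c + c0), l => x; rewrite -cat1s den_cat den1 e0 eqxx hc hl addrA.
- case: (boolP (m == 0)) => h0.
    exists c0, ((c, r, s', Z) :: l) => x.
    by rewrite -cat1s den_cat den1 h0 hf hl big_cons /= addrCA.
  by exists c0, l => x; rewrite -cat1s den_cat den1 (negbTE h0) add0r hl.
Qed.

Theorem lemma3p4
  (X : Type) (opn : (X -> Prop) -> Prop)
  (Htop : is_topology opn) (Hcpt : compact_space opn)
  (Htd : totally_disconnected opn) (Hmet : metrizable opn)
  (T Tinv : X -> X) (HTK : cancel T Tinv) (HTKi : cancel Tinv T)
  (HTc : continuous opn T) (HTic : continuous opn Tinv)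
  (K : fieldType) (conj : {rmorphism K -> K}) (Hconj : involutive conj)
  (E : pred X) (HEcl : clopen opn E) (HEne : exists x, E x)
  (I : finType) (Zs : I -> pred X)
  (HPcl : forall i, clopen opn (Zs i))
  (HPne : forall i, exists x, Zs i x)
  (HPdisj : forall i j x, i != j -> Zs i x -> Zs j x -> False)
  (HPcov : forall x, ~~ E x <-> exists i, Zs i x) :
  forall a : int -> X -> K,
    in_B0 conj T Tinv Zs a <-> in_span_proj T Tinv Zs a.
Proof.
move=> a; split.
- case=> [[s hs hden] hz].
  have hg : allgood T Tinv Zs s.
    apply: (hs (fun b => allgood T Tinv Zs b)).
    + by split=> //; left; split=> //; exists 1.
    + move=> i; split=> //; right; exists 1, 0%N, 1%N, (fun _ => i); split.
        by apply/andP; split; rewrite /=; lia.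
      move=> x; rewrite mul1r; apply: chi_ext; rewrite cylP; split.
        move=> hz0 j hj; have -> : j = 0 by lia.
        by rewrite oppr0 Tpow0.
      by move=> H; have := H 0 ltac:(apply/andP; split; lia); rewrite oppr0 Tpow0.
    + by move=> b c; apply: allgood_cat.
    + by move=> k b; apply: allgood_map => p; apply: good_scale.
    + move=> b c hb hc.
      apply: (@allgood_allpairs _ _ _ _ _ _
        (fun p q => (p.1 + q.1, fun x => p.2 x * q.2 (Tpow T Tinv (- p.1) x)))) => //.
      by move=> p q; apply: good_mul.
    + by move=> b; apply: allgood_map => p; apply: good_star.
  have [c0 [l hl]] := extract hg.
  exists c0, l => n x; case: (boolP (n == 0)) => hn.
    by rewrite -hden (eqP hn) hl.
  by apply: hz.
- case=> c0 [l hl]; split; last by move=> n x hn; rewrite hl (negbTE hn).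
  have [s [hs hd]] := span_in HTK HTKi conj Zs c0 l.
  by exists s => // n x; rewrite hd hl.
Qed.
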